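(* Let $f:\mathbb{R}^n\to\mathbb{R}$ be strongly convex with constant $\mu\ge0$, let $\gamma_k>0$, $\delta_k>0$, $s_k>0$ for all $k$, and let $\{x_k\}$ be generated by the random incremental penalty method. Assume there is $M>0$ such that, almost surely, for all $k\ge1$, $\|\tilde\nabla f(x_k)\|\le M$ and $\|v\|\le M$ for every $v\in\partial f(\Pi_X[x_k])$. Then, for arbitrary $\eta\in[0,1]$, almost surely for all $y\in X$ and $k\ge1$, $$\begin{aligned}\mathbb{E}\big[\|x_{k+1}-y\|^2\mid\mathcal{F}_k\big]\le{}&(1-\mu s_k)\|x_k-y\|^2+2s_k(1-\eta)\big(f(y)-f(x_k)\big)+2s_k\eta\big(f(y)-f(\Pi_X[x_k])\big)\\&+\frac{s_k\gamma_k\delta_k}{2\alpha_{\min}}-2s_k\Big(\frac{\gamma_k}{m\beta}-\eta M\Big)\mathrm{dist}(x_k,X)-\eta\mu s_k\,\mathrm{dist}^2(x_k,X)+2s_k^2(M^2+\gamma_k^2).\end{aligned}$$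
   Context: Let $a_1,\dots,a_m\in\mathbb{R}^n$ be nonzero vectors and $b_1,\dots,b_m\in\mathbb{R}$; $X_i=\{x:\langle a_i,x\rangle-b_i\le0\}$, $X=\bigcap_{i=1}^mX_i$ (assumed nonempty), $\alpha_{\min}=\min_i\|a_i\|$; $\Pi_X$ is the Euclidean projection onto $X$. $\beta>0$ is a Hoffman constant: a scalar with $\beta\sum_{i=1}^m\mathrm{dist}(x,X_i)\ge\mathrm{dist}(x,X)$ for all $x$. Strong convexity with constant $\mu\ge0$ means $f(u)\ge f(v)+\langle g,u-v\rangle+\frac{\mu}{2}\|u-v\|^2$ for all $u,v$ and $g\in\partial f(v)$. For $\delta>0$, nonzero $a$ and scalar $b$: $h_\delta(x;a,b)=\frac{\langle a,x\rangle-b}{\|a\|}$ if $\langle a,x\rangle-b>\delta$, $\frac{(\langle a,x\rangle-b+\delta)^2}{4\delta\|a\|}$ if $-\delta\le\langle a,x\rangle-b\le\delta$, $0$ if $\langle a,x\rangle-b<-\delta$; $\nabla h_\delta(x;a,b)=\frac{1}{\|a\|}p'_\delta(\langle a,x\rangle-b)\,a$ with $p'_\delta(s)=1$ for $s>\delta$, $\frac{s+\delta}{2\delta}$ for $|s|\le\delta$, $0$ for $s<-\delta$. Random incremental penalty method: random $x_1$ with $\mathbb{E}\|x_1\|^2<\infty$; for $k\ge1$, $x_{k+1}=x_k-s_k\big[\tilde\nabla f(x_k)+\gamma_k\nabla h_{\delta_k}(x_k;a_{i_k},b_{i_k})\big]$ with $\tilde\nabla f(x_k)\in\partial f(x_k)$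 and $i_k$ uniform on $\{1,\dots,m\}$ independent of $x_1,i_1,\dots,i_{k-1}$. $\mathcal{F}_k$ is the $\sigma$-algebra generated by $x_1,\dots,x_k$. *)

(* Defs.v *)
From HB Require Import structures.
From mathcomp Require Import all_boot all_order all_algebra.
From mathcomp Require Import all_classical all_reals all_analysis.
Set Implicit Arguments. Unset Strict Implicit. Unset Printing Implicit Defensive.
Import Order.TTheory GRing.Theory Num.Theory.
Local Open Scope classical_set_scope.
Local Open Scope ring_scope.

Section Defs.
Variable R : realType.

Definition dotv n (u v : 'rV[R]_n) : R := \sum_(j < n) u ord0 j * v ord0 j.
Definition normv n (u : 'rV[R]_n) : R := Num.sqrt (dotv u u).

Definition distv n (x : 'rV[R]_n) (S : set 'rV[R]_n) : R :=
  inf [set normv (x - y) | y in S].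

Definition halfspace n (a : 'rV[R]_n) (b : R) : set 'rV[R]_n :=
  [set x | dotv a x - b <= 0].

Definition Xfeas n m (a : 'I_m -> 'rV[R]_n) (b : 'I_m -> R) : set 'rV[R]_n :=
  \bigcap_(i in setT) halfspace (a i) (b i).

Definition alpha_min n m (a : 'I_m -> 'rV[R]_n) : R :=
  inf (range (fun i => normv (a i))).

Definition is_proj n (S : set 'rV[R]_n) (x p : 'rV[R]_n) : Prop :=
  S p /\ forall q, S q -> normv (x - p) <= normv (x - q).

Definition subgrad n (f : 'rV[R]_n -> R) (v g : 'rV[R]_n) : Prop :=
  forall u, f v + dotv g (u - v) <= f u.

Definition strongly_convex n (f : 'rV[R]_n -> R) (mu : R) : Prop :=
  forall u v g, subgrad f v g ->
    f v + dotv g (u - v) + mu / 2 * normv (u - v) ^+ 2 <= f u.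

Definition hoffman n m (a : 'I_m -> 'rV[R]_n) (b : 'I_m -> R) (beta : R) : Prop :=
  0 < beta /\
  forall x, distv x (Xfeas a b) <= beta * \sum_(i < m) distv x (halfspace (a i) (b i)).

Definition pdelta (delta s : R) : R :=
  if delta < s then 1 else if s < - delta then 0 else (s + delta) / (2 * delta).

Definition grad_h n (delta : R) (a : 'rV[R]_n) (b : R) (x : 'rV[R]_n) : 'rV[R]_n :=
  (pdelta delta (dotv a x - b) / normv a) *: a.

Definition rV_borel n : set (set 'rV[R]_n) :=
  <<s [set A | exists (j : 'I_n) (B : set R),
                 measurable B /\ A = (fun v : 'rV[R]_n => v ord0 j) @^-1` B] >>.

Definition rV_borel_fun n (g : 'rV[R]_n -> 'rV[R]_n) : Prop :=
  forall (j : 'I_n) (B : set R), measurable B ->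
    rV_borel ((fun v => g v ord0 j) @^-1` B).

Context d (T : measurableType d).

Definition rvec n (X : T -> 'rV[R]_n) : Prop :=
  forall j : 'I_n, measurable_fun setT (fun w => X w ord0 j).

Definition filtr n (x : nat -> T -> 'rV[R]_n) (k : nat) : set (set T) :=
  <<s [set A | exists (l : nat) (j : 'I_n) (B : set R),
                 [/\ (1 <= l <= k)%N, measurable B &
                     A = (fun w => x l w ord0 j) @^-1` B]] >>.

Definition past_sigma n m (x : nat -> T -> 'rV[R]_n) (i : nat -> T -> 'I_m)
    (k : nat) : set (set T) :=
  <<s [set A | (exists (j : 'I_n) (B : set R),
                  measurable B /\ A = (fun w => x 1%N w ord0 j) @^-1` B)
            \/ (exists (l : nat) (c : 'I_m),
                  (1 <= l < k)%N /\ A = i l @^-1` [set c])] >>.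

Definition cond_exp_version (P : probability T R) (F : set (set T))
    (X Z : T -> R) : Prop :=
  [/\ (forall B : set R, measurable B -> F (Z @^-1` B)),
      P.-integrable setT (fun w => (Z w)%:E) &
      forall A, F A ->
        (\int[P]_(w in A) (Z w)%:E = \int[P]_(w in A) (X w)%:E)%E].

End Defs.

(* Main.v *)
Require Import Defs.
From HB Require Import structures.
From mathcomp Require Import all_boot all_order all_algebra.
From mathcomp Require Import all_classical all_reals all_analysis.
From mathcomp Require Import measurable_realfun.
From mathcomp Require Import ring lra.
Import Order.TTheory GRing.Theory Num.Theory.
Local Open Scope classical_set_scope.
Local Open Scope ring_scope.
Set Implicit Arguments. Unset Strict Implicit. Unset Printing Implicit Defensive.

Definition rvT (R : realType) n := 'rV[R]_n.
HB.instance Definition _ R n := Choice.on (rvT R n).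
HB.instance Definition _ R n := isPointed.Build (rvT R n) 0.
Section Vec.
Variables (R : realType) (n : nat).
Implicit Types (u v w : 'rV[R]_n) (c : R).

Lemma dotvDl u v w : dotv (u + v) w = dotv u w + dotv v w.
Proof. by rewrite /dotv -big_split; apply: eq_bigr => j _; rewrite !mxE mulrDl. Qed.
Lemma dotvC u v : dotv u v = dotv v u.
Proof. by apply: eq_bigr => j _; rewrite mulrC. Qed.
Lemma dotvDr u v w : dotv u (v + w) = dotv u v + dotv u w.
Proof. by rewrite dotvC dotvDl !(dotvC u). Qed.
Lemma dotvZl c u v : dotv (c *: u) v = c * dotv u v.
Proof. by rewrite /dotv mulr_sumr; apply: eq_bigr => j _; rewrite !mxE mulrA. Qed.
Lemma dotvZr c u v : dotv u (c *: v) = c * dotv u v.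
Proof. by rewrite dotvC dotvZl dotvC. Qed.
Lemma dotvNl u v : dotv (- u) v = - dotv u v.
Proof. by rewrite -scaleN1r dotvZl mulN1r. Qed.
Lemma dotvNr u v : dotv u (- v) = - dotv u v.
Proof. by rewrite dotvC dotvNl dotvC. Qed.
Lemma dotvBl u v w : dotv (u - v) w = dotv u w - dotv v w.
Proof. by rewrite dotvDl dotvNl. Qed.
Lemma dotvBr u v w : dotv u (v - w) = dotv u v - dotv u w.
Proof. by rewrite dotvDr dotvNr. Qed.
Lemma dotv_ge0 u : 0 <= dotv u u.
Proof. by apply: sumr_ge0 => j _; rewrite -expr2 sqr_ge0. Qed.
Lemma normv_ge0 u : 0 <= normv u.
Proof. exact: sqrtr_ge0. Qed.
Lemma normv_sq u : normv u ^+ 2 = dotv u u.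
Proof. by rewrite sqr_sqrtr// dotv_ge0. Qed.
Lemma dotv0_eq u : dotv u u = 0 -> forall j, u ord0 j = 0.
Proof.
move=> h j.
have H : forall i : 'I_n, xpredT i -> 0 <= u ord0 i * u ord0 i.
  by move=> i _; rewrite -expr2 sqr_ge0.
have /eqP := @psumr_eq0P R _ xpredT (fun j => u ord0 j * u ord0 j) H h j isT.
by rewrite mulf_eq0 orbb => /eqP.
Qed.
Lemma dotv_zero u v : dotv u u = 0 -> dotv u v = 0.
Proof. by move=> /dotv0_eq h; apply: big1 => j _; rewrite h mul0r. Qed.

Lemma cauchy_schwarz u v : dotv u v <= normv u * normv v.
Proof.
have [u0|] := eqVneq (normv u) 0.
  have : dotv u u = 0 by rewrite -normv_sq u0 expr0n.
  by move/(dotv_zero v) ->; rewrite u0 mul0r.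
have [v0 _|] := eqVneq (normv v) 0.
  have : dotv v v = 0 by rewrite -normv_sq v0 expr0n.
  by move/(dotv_zero u); rewrite dotvC => ->; rewrite v0 mulr0.
move=> nv0 nu0.
have hu : 0 < normv u by rewrite lt_neqAle eq_sym nu0 normv_ge0.
have hv : 0 < normv v by rewrite lt_neqAle eq_sym nv0 normv_ge0.
have := dotv_ge0 (normv v *: u - normv u *: v).
rewrite !(dotvBl, dotvBr, dotvZl, dotvZr) -!normv_sq (dotvC v u).
set X := dotv u v; set a := normv u; set b := normv v => h.
have hab : 0 < a * b by rewrite mulr_gt0.
nra.
Qed.

Lemma cauchy_schwarzN u v : - (normv u * normv v) <= dotv u v.
Proof.
have := cauchy_schwarz (- u) v.
rewrite dotvNl.
suff -> : normv (- u) = normv u by rewrite lerNl.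
by rewrite /normv dotvNl dotvNr opprK.
Qed.

Lemma normvZ c u : normv (c *: u) = `|c| * normv u.
Proof. by rewrite /normv dotvZl dotvZr mulrA -expr2 sqrtrM ?sqr_ge0// sqrtr_sqr. Qed.

Lemma normvN u : normv (- u) = normv u.
Proof. by rewrite /normv dotvNl dotvNr opprK. Qed.

Lemma normv_sub0 u : normv (u - u) = 0.
Proof. by rewrite subrr /normv /dotv big1 ?sqrtr0// => j _; rewrite mxE mul0r. Qed.

End Vec.
Section Dist.
Variables (R : realType) (n : nat).
Implicit Types (x q z a : 'rV[R]_n) (S : set 'rV[R]_n).

Lemma distv_le x q S : S q -> distv x S <= normv (x - q).
Proof.
move=> Sq; apply: ge_inf; last by exists q.
by exists 0 => _ [y _ <-]; exact: normv_ge0.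
Qed.

Lemma distv_proj S x p : is_proj S x p -> distv x S = normv (x - p).
Proof.
move=> [Sp hp]; apply/eqP; rewrite eq_le distv_le //=.
apply: lb_le_inf; first by exists (normv (x - p)), p.
by move=> _ [q Sq <-]; exact: hp.
Qed.

Lemma normv_gt0 a : a != 0 -> 0 < normv a.
Proof.
move=> a0; rewrite lt_neqAle normv_ge0 andbT eq_sym; apply/negP => /eqP h.
have : dotv a a = 0 by rewrite -normv_sq h expr0n.
move/dotv0_eq => H; move/negP: a0; apply; apply/eqP/rowP => j.
by rewrite H mxE.
Qed.

Lemma dist_half a b z : a != 0 ->
  distv z (halfspace a b) <=
  (if dotv a z - b <= 0 then 0 else (dotv a z - b) / normv a).
Proof.
move=> a0; have na := normv_gt0 a0.
case: ifPn => ht.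
  by rewrite -(normv_sub0 z); apply: distv_le.
set t := dotv a z - b in ht *.
have tp : 0 < t by rewrite ltNge.
pose q := z - (t / normv a ^+ 2) *: a.
have -> : t / normv a = normv (z - q).
  rewrite /q opprB addrC subrK normvZ ger0_norm; last first.
    by rewrite divr_ge0 ?ltW// exprn_gt0.
  by rewrite expr2 invfM !mulrA mulfVK// gt_eqF.
apply: distv_le; rewrite /halfspace /= /q dotvBr dotvZr -normv_sq.
rewrite mulfVK ?gt_eqF ?exprn_gt0//.
rewrite /t; lra.
Qed.

Lemma pdelta_ge0 (dl s : R) : 0 < dl -> 0 <= pdelta dl s.
Proof.
move=> d0; rewrite /pdelta; case: ifP => // h1; case: ifP => // h2.
move: h2 => /negbT; rewrite -leNgt => h2.
apply: divr_ge0; lra.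
Qed.

Lemma pdelta_le1 (dl s : R) : 0 < dl -> pdelta dl s <= 1.
Proof.
move=> d0; rewrite /pdelta; case: ifP => // h1; case: ifP => // h2.
rewrite ler_pdivrMr ?mulr_gt0// mul1r.
move: h1 => /negbT; rewrite -leNgt => h1; lra.
Qed.

Lemma pdelta_key (dl t : R) : 0 < dl ->
  t - dl / 4 <= pdelta dl t * t /\ - (dl / 4) <= pdelta dl t * t.
Proof.
move=> d0; rewrite /pdelta; case: ifPn => h1.
  by rewrite mul1r; split; lra.
case: ifPn => h2; first by rewrite mul0r; split; lra.
rewrite -leNgt in h1; rewrite -leNgt in h2.
have e : (t + dl) / (2 * dl) * t = ((t + dl) * t) / (2 * dl) by rewrite mulrAC.
rewrite e; split.
- rewrite ler_pdivlMr ?mulr_gt0//.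
  have [t0|t0] := lerP 0 t; nra.
- rewrite ler_pdivlMr ?mulr_gt0//; nra.
Qed.

End Dist.
Section Step.
Variables (R : realType) (n : nat).

Lemma dot_sum_sq (g d : 'rV[R]_n) (c : R) :
  dotv (g + c *: d) (g + c *: d) <= 2 * dotv g g + 2 * c ^+ 2 * dotv d d.
Proof.
have h0 := dotv_ge0 (g - c *: d).
move: h0; rewrite !(dotvDl, dotvDr, dotvBl, dotvBr, dotvZl, dotvZr, dotvNl, dotvNr).
rewrite (dotvC d g) => h0; nra.
Qed.

Lemma dot_expand (e w : 'rV[R]_n) (s : R) :
  dotv (e - s *: w) (e - s *: w) = dotv e e - 2 * s * dotv w e + s ^+ 2 * dotv w w.
Proof.
rewrite !(dotvDl, dotvDr, dotvBl, dotvBr, dotvZl, dotvZr, dotvNl, dotvNr) (dotvC e w).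
by rewrite expr2; ring.
Qed.

Lemma dot_lin (g d e : 'rV[R]_n) (c : R) :
  dotv (g + c *: d) e = dotv g e + c * dotv d e.
Proof. by rewrite dotvDl dotvZl. Qed.

Lemma step_bound (a : 'rV[R]_n) (b : R) (z y g : 'rV[R]_n) (s gam dl M al : R) :
  a != 0 -> dotv a y - b <= 0 -> 0 < gam -> 0 < dl -> 0 < s -> 0 < al ->
  al <= normv a -> normv g <= M ->
  normv (z - s *: (g + gam *: grad_h dl a b z) - y) ^+ 2 <=
  dotv (z - y) (z - y) - 2 * s * dotv g (z - y)
  - 2 * s * gam * (distv z (halfspace a b) - dl / (4 * al))
  + 2 * s ^+ 2 * (M ^+ 2 + gam ^+ 2).
Proof.
move=> a0 hy g0 d0 s0 al0 alna gM.
have na := normv_gt0 a0.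
set e := z - y; set d := grad_h dl a b z.
set p := pdelta dl (dotv a z - b).
have p0 : 0 <= p by exact: pdelta_ge0.
have p1 : p <= 1 by exact: pdelta_le1.
have -> : z - s *: (g + gam *: d) - y = e - s *: (g + gam *: d).
  by rewrite /e addrAC.
rewrite normv_sq.
have hW : dotv (g + gam *: d) (g + gam *: d) <= 2 * M ^+ 2 + 2 * gam ^+ 2.
  have hdd : dotv d d <= 1.
    rewrite /d /grad_h dotvZl dotvZr -normv_sq mulrA -expr2 expr_div_n.
    rewrite divfK ?expf_neq0 ?gt_eqF//.
    by rewrite expr_le1.
  have hgg : dotv g g <= M ^+ 2.
    rewrite -normv_sq; have ng0 := normv_ge0 g; nra.
  have h0 := dot_sum_sq g d gam.
  have hg2 : 0 <= gam ^+ 2 by rewrite sqr_ge0.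
  have := ler_wpM2l hg2 hdd; rewrite mulr1 => h1.
  nra.
have hDe : distv z (halfspace a b) - dl / (4 * al) <= dotv d e.
  have he : dotv d e = p / normv a * ((dotv a z - b) - (dotv a y - b)).
    by rewrite /d /grad_h dotvZl /e dotvBr; congr (_ * _); lra.
  have hq : dl / (4 * normv a) <= dl / (4 * al).
    have hi : (normv a)^-1 <= al^-1 by rewrite lef_pV2 ?posrE.
    rewrite !invfM !mulrA; apply: ler_wpM2l => //.
    by rewrite mulr_ge0 ?invr_ge0 ?ltW.
  have hpt : p * (dotv a z - b) / normv a <= dotv d e.
    have h : p * (dotv a z - b) <= p * ((dotv a z - b) - (dotv a y - b)).
      by apply: ler_wpM2l => //; lra.
    have ina : 0 <= (normv a)^-1 by rewrite invr_ge0 ltW.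
    have h' := ler_wpM2r ina h.
    by rewrite he; apply: le_trans h' _; rewrite mulrAC.
  have [k1 k2] := pdelta_key (dotv a z - b) d0.
  rewrite -/p in k1 k2.
  have ina : 0 <= (normv a)^-1 by rewrite invr_ge0 ltW.
  have e1 : dl / (4 * normv a) = (dl / 4) / normv a by rewrite invfM mulrA.
  have hd := dist_half b z a0.
  move: hd; case: ifPn => ht hd.
    have h3 := ler_wpM2r ina k2.
    rewrite mulNr in h3; lra.
  have h3 := ler_wpM2r ina k1.
  rewrite mulrBl in h3; lra.
rewrite dot_expand dot_lin.
have hs2 : 0 <= s ^+ 2 by rewrite sqr_ge0.
have := ler_wpM2l hs2 hW => h1.
have hsg : 0 <= 2 * s * gam by rewrite !mulr_ge0 ?ltW.
have := ler_wpM2l hsg hDe => h2.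
nra.
Qed.

End Step.
Section Pointwise.
Variables (R : realType) (n m : nat) (a : 'I_m -> 'rV[R]_n) (b : 'I_m -> R) (beta : R)
  (f : 'rV[R]_n -> R) (mu : R) (gf : 'rV[R]_n -> 'rV[R]_n)
  (PiX : 'rV[R]_n -> 'rV[R]_n) (gam dl s M eta : R).

Lemma alpha_le c : alpha_min a <= normv (a c).
Proof.
apply: ge_inf; last by exists c.
by exists 0 => _ [c' _ <-]; exact: normv_ge0.
Qed.

Lemma alpha_gt0 : (0 < m)%N -> (forall l, a l != 0) -> 0 < alpha_min a.
Proof.
move=> m0 ha.
have [c0 _ hc0] : exists2 c0 : 'I_m, True & forall c, normv (a c0) <= normv (a c).
  case: (@arg_minP _ _ _ (Ordinal m0) xpredT (fun c => normv (a c)) isT).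
  by move=> c0 _ h; exists c0 => // c; exact: h.
apply: (lt_le_trans (normv_gt0 (ha c0))).
apply: lb_le_inf; first by exists (normv (a c0)), c0.
by move=> _ [c _ <-]; exact: hc0.
Qed.

Lemma pointwise y z : (0 < m)%N -> (forall l, a l != 0) -> hoffman a b beta ->
  (forall z, is_proj (Xfeas a b) z (PiX z)) ->
  strongly_convex f mu -> (forall z, subgrad f z (gf z)) ->
  0 < gam -> 0 < dl -> 0 < s -> 0 <= eta <= 1 -> Xfeas a b y ->
  normv (gf z) <= M -> (forall v, subgrad f (PiX z) v -> normv v <= M) ->
  \sum_(c < m) m%:R^-1 * normv (z - s *: (gf z + gam *: grad_h dl (a c) (b c) z) - y) ^+ 2
  <= (1 - mu * s) * normv (z - y) ^+ 2
            + 2 * s * (1 - eta) * (f y - f z)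
            + 2 * s * eta * (f y - f (PiX z))
            + s * gam * dl / (2 * alpha_min a)
            - 2 * s * (gam / (m%:R * beta) - eta * M)
                * distv z (Xfeas a b)
            - eta * mu * s * distv z (Xfeas a b) ^+ 2
            + 2 * s ^+ 2 * (M ^+ 2 + gam ^+ 2).
Proof.
move=> m0 ha [beta0 hhof] hproj hsc hsub g0 d0 s0 /andP[eta0 eta1] hyX hgM hPM.
set al := alpha_min a.
have al0 : 0 < al by exact: alpha_gt0.
have hy c : dotv (a c) y - b c <= 0 by exact: (hyX c I).
set S := \sum_(c < m) distv z (halfspace (a c) (b c)).
set E2 := dotv (z - y) (z - y); set Ge := dotv (gf z) (z - y).
set K := E2 - 2 * s * Ge + 2 * s * gam * (dl / (4 * al)) + 2 * s ^+ 2 * (M ^+ 2 + gam ^+ 2).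
have mr0 : 0 < m%:R :> R by rewrite ltr0n.
have hsum : \sum_(c < m) m%:R^-1 * normv (z - s *: (gf z + gam *: grad_h dl (a c) (b c) z) - y) ^+ 2
    <= K - 2 * s * gam * S / m%:R.
  apply: (@le_trans _ _ (\sum_(c < m) m%:R^-1 * (K - (2 * s * gam) * distv z (halfspace (a c) (b c))))).
    apply: ler_sum => c _; apply: ler_wpM2l; first by rewrite invr_ge0 ltW.
    have := @step_bound _ _ (a c) (b c) z y (gf z) s gam dl M al (ha c) (hy c) g0 d0 s0 al0 (alpha_le c) hgM.
    by rewrite -/E2 -/Ge /K; lra.
  rewrite -mulr_sumr sumrB sumr_const card_ord -mulr_sumr -/S -mulr_natr.
  by rewrite le_eqVlt; apply/orP; left; apply/eqP; field; rewrite gt_eqF.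
have F2 : f z - Ge + mu / 2 * E2 <= f y.
  have := hsc y z (gf z) (hsub z).
  have -> : y - z = - (z - y) by rewrite opprB.
  by rewrite dotvNr normvN normv_sq -/E2 -/Ge.
set D := distv z (Xfeas a b).
have hD : D = normv (z - PiX z) by exact: distv_proj.
have D0 : 0 <= D by rewrite hD normv_ge0.
have F3 : f (PiX z) - M * D + mu / 2 * D ^+ 2 <= f z.
  have := hsc z (PiX z) (gf (PiX z)) (hsub (PiX z)).
  have cs := cauchy_schwarzN (gf (PiX z)) (z - PiX z).
  have hM := hPM _ (hsub (PiX z)).
  have := ler_wpM2r (normv_ge0 (z - PiX z)) hM.
  move: cs; rewrite -hD; move=> h0 h1 h2; lra.
have F4 : D <= beta * S by exact: hhof.
have A : - (2 * s * Ge) <= 2 * s * (f y - f z) - mu * s * E2.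
  have := ler_wpM2l (ltW (mulr_gt0 (ltr0n _ 2) s0) : 0 <= 2 * s) F2.
  lra.
have B : 2 * s * eta * (f y - f z) <= 2 * s * eta * (f y - f (PiX z))
    + 2 * s * eta * M * D - s * eta * mu * D ^+ 2.
  have hse : 0 <= 2 * s * eta by nra.
  have := ler_wpM2l hse F3; lra.
have C : 2 * s * gam * (dl / (4 * al)) = s * gam * dl / (2 * al).
  by field; rewrite gt_eqF.
have Dd : 2 * s * (gam / (m%:R * beta)) * D <= 2 * s * gam * S / m%:R.
  have h1 : D / beta <= S by rewrite ler_pdivrMr // mulrC.
  have hg : 0 <= 2 * s * gam / m%:R.
    by apply: divr_ge0; [nra | exact: ltW].
  have := ler_wpM2l hg h1.
  have -> : 2 * s * gam / m%:R * (D / beta) = 2 * s * (gam / (m%:R * beta)) * D.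
    by field; rewrite !gt_eqF.
  lra.
rewrite normv_sq -/E2.
apply: le_trans hsum _; rewrite /K.
lra.
Qed.

End Pointwise.
Section Meas.
Variables (R : realType) (n : nat).
Definition Gv : set (set (rvT R n)) :=
  [set A | exists (j : 'I_n) (B : set R),
                 measurable B /\ A = (fun v : 'rV[R]_n => v ord0 j) @^-1` B].
Definition RV := g_sigma_algebraType Gv.

Lemma meas_coord j : measurable_fun (setT : set RV) (fun v : RV => v ord0 j).
Proof. by move=> _ B mB; rewrite setTI; apply: sub_sigma_algebra; exists j, B. Qed.

Lemma meas_of_coords d' (T' : measurableType d') (X : T' -> RV) :
  (forall j, measurable_fun setT (fun w => X w ord0 j)) -> measurable_fun setT X.
Proof.
move=> hX; apply: (@measurability _ _ T' RV setT X Gv) => //.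
move=> _ [A [j [B [mB ->]]] <-].
exact: (hX j measurableT B mB).
Qed.

Lemma meas_gf (gf : 'rV[R]_n -> 'rV[R]_n) : rV_borel_fun gf -> forall j,
  measurable_fun (setT : set RV) (fun v : RV => gf v ord0 j).
Proof. by move=> hgf j _ B mB; rewrite setTI; exact: hgf. Qed.

End Meas.
Lemma pdelta_minmax (R : realType) (dl t : R) : 0 < dl ->
  pdelta dl t = Num.min 1 (Num.max 0 ((t + dl) / (2 * dl))).
Proof.
move=> d0; have d2 : 0 < 2 * dl by rewrite mulr_gt0.
rewrite /pdelta maxEle minEle.
case: ifPn => h1.
  have q1 : 1 <= (t + dl) / (2 * dl) by rewrite ler_pdivlMr// mul1r; lra.
  have q0 : 0 <= (t + dl) / (2 * dl) by lra.
  by rewrite q0 q1.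
case: ifPn => h2.
  have q0 : (0 <= (t + dl) / (2 * dl)) = false.
    apply/negbTE; rewrite -ltNge ltr_pdivrMr// mul0r; lra.
  by rewrite q0 ler10.
rewrite -leNgt in h1; rewrite -leNgt in h2.
have q0 : 0 <= (t + dl) / (2 * dl) by apply: divr_ge0; lra.
have q1 : (t + dl) / (2 * dl) <= 1 by rewrite ler_pdivrMr// mul1r; lra.
rewrite q0; case: ifPn => // h.
by apply/eqP; rewrite eq_le q1 h.
Qed.

Section MeasStep.
Variables (R : realType) (n : nat).

Lemma meas_pdelta (dl : R) : 0 < dl -> measurable_fun (setT : set R) (pdelta dl).
Proof.
move=> d0; rewrite (_ : pdelta dl = fun t => Num.min 1 (Num.max 0 ((t + dl) / (2 * dl)))).
  apply: measurable_minr => //; apply: measurable_maxr => //.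
  by apply: measurable_funM => //; apply: measurable_funD.
by apply/funext => t; rewrite pdelta_minmax.
Qed.

Lemma meas_dotv (a : 'rV[R]_n) : measurable_fun (setT : set (RV R n)) (fun v : RV R n => dotv a v).
Proof.
rewrite /dotv; apply: measurable_sum => j.
by apply: measurable_funM => //; exact: meas_coord.
Qed.

Lemma meas_step (gf : 'rV[R]_n -> 'rV[R]_n) (hgf : rV_borel_fun gf) (s gam dl : R)
  (a : 'rV[R]_n) (b : R) (y : 'rV[R]_n) j : 0 < dl ->
  measurable_fun (setT : set (RV R n))
    (fun v : RV R n => (v - s *: (gf v + gam *: grad_h dl a b v) - y) ord0 j).
Proof.
move=> d0.
rewrite (_ : (fun v : RV R n => _) = fun v : RV R n => v ord0 j - s * (gf v ord0 j
   + gam * (pdelta dl (dotv a v - b) / normv a * a ord0 j)) - y ord0 j); last first.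
  by apply/funext => v; rewrite /grad_h !mxE.
apply: measurable_funB => //; apply: measurable_funB; first exact: meas_coord.
apply: measurable_funM => //; apply: measurable_funD; first exact: meas_gf.
apply: measurable_funM => //; apply: measurable_funM => //.
apply: measurable_funM => //.
apply: (measurableT_comp (meas_pdelta d0)).
by apply: measurable_funB => //; exact: meas_dotv.
Qed.

Lemma meas_phi (gf : 'rV[R]_n -> 'rV[R]_n) (hgf : rV_borel_fun gf) (s gam dl : R)
  (a : 'rV[R]_n) (b : R) (y : 'rV[R]_n) : 0 < dl ->
  measurable_fun (setT : set (RV R n))
    (fun v : RV R n => normv (v - s *: (gf v + gam *: grad_h dl a b v) - y) ^+ 2).
Proof.
move=> d0.
rewrite (_ : (fun v : RV R n => _) = fun v : RV R n =>
   \sum_(j < n) ((v - s *: (gf v + gam *: grad_h dl a b v) - y) ord0 j *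
                 (v - s *: (gf v + gam *: grad_h dl a b v) - y) ord0 j)); last first.
  by apply/funext => v; rewrite normv_sq.
apply: measurable_sum => j.
by apply: measurable_funM; exact: meas_step.
Qed.

End MeasStep.

Lemma meas_comp_coords d' (T' : measurableType d') (R : realType) n
  (X : T' -> 'rV[R]_n) (phi : RV R n -> R) :
  (forall j, measurable_fun setT (fun w => X w ord0 j)) ->
  measurable_fun (setT : set (RV R n)) phi ->
  measurable_fun (setT : set T') (fun w => phi (X w)).
Proof.
move=> hX mphi.
exact: (measurableT_comp mphi (@meas_of_coords R n d' T' X hX)).
Qed.

Lemma meas_fin_case d' (T' : measurableType d') (R : realType) m
  (i : T' -> 'I_m) (F : 'I_m -> T' -> R) :
  (forall c, measurable (i @^-1` [set c])) ->
  (forall c, measurable_fun setT (F c)) ->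
  measurable_fun (setT : set T') (fun w => F (i w) w).
Proof.
move=> hi hF.
rewrite (_ : (fun w => F (i w) w) = fun w =>
   \sum_(c < m) (\1_(i @^-1` [set c]) w : R) * F c w); last first.
  apply/funext => w; rewrite (bigD1 (i w)) //= big1 ?addr0.
    by rewrite indicE mem_set// mul1r.
  move=> c /eqP hc; rewrite indicE memNset ?mul0r//.
  by move=> /= hic; apply: hc.
apply: measurable_sum => c; apply: measurable_funM => //.
Qed.
Lemma meas_sub d (T : measurableType d) (G : set (set T)) (hG : G `<=` measurable)
   d' (U : measurableType d') (f : T -> U) :
  measurable_fun (setT : set (g_sigma_algebraType G)) f -> measurable_fun (setT : set T) f.
Proof.
move=> mf _ Y mY; have := mf measurableT Y mY.
move=> h; exact: (smallest_sub (@sigma_algebra_measurable _ T) hG h).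
Qed.

Section SubInt.
Import HBNNSimple.
Local Open Scope ereal_scope.
Context d (T : measurableType d) (R : realType) (G : set (set T)) (hG : G `<=` measurable).
Variables (f : T -> R) (mf : measurable_fun (setT : set (g_sigma_algebraType G)) f)
  (f0 : forall x, (0 <= f x)%R).

Let TG := g_sigma_algebraType G.
Let mfE : @measurable_fun _ _ TG (\bar R) setT (fun x => (f x)%:E).
Proof. exact/measurable_EFinP. Qed.
Let f_ := nnsfun_approx (@measurableT _ TG) mfE.

Let mf_ k : measurable_fun (setT : set T) (f_ k).
Proof. exact: (meas_sub hG (measurable_funPT (f_ k))). Qed.

Let mpre k r : measurable (f_ k @^-1` [set r] : set T).
Proof.
have := mf_ k measurableT (measurable_set1 r); by rewrite setTI.
Qed.

Let HE (mu : {measure set T -> \bar R}) (E : set T) (mE : measurable E) :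
  \int[mu]_(x in E) (f x)%:E =
  limn (fun k => \sum_(r \in range (f_ k)) (r%:E * mu (f_ k @^-1` [set r] `&` E))).
Proof.
transitivity (limn (fun k => \int[mu]_(x in E) (f_ k x)%:E)).
  rewrite -monotone_convergence//.
  - apply: eq_integral => x _; apply/esym/cvg_lim => //.
    by apply: (@cvg_nnsfun_approx _ TG R setT) => // y _; rewrite lee_fin.
  - by move=> k; apply/measurable_funTS/measurable_EFinP.
  - by move=> k x _; rewrite lee_fin.
  - move=> x _ a b ab; rewrite lee_fin.
    by have /lefP := @nd_nnsfun_approx _ TG R setT (@measurableT _ TG) _ mfE a b ab; apply.
congr (limn _); apply/funext => k.
under eq_integral do rewrite fimfunE -fsumEFin//.
rewrite ge0_integral_fsum//; last 2 first.
- move=> r; apply/measurable_EFinP; apply: measurable_funM => //.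
  by apply: measurable_indic; exact: mpre.
- by move=> r x _; rewrite nnfun_muleindic_ge0.
apply: eq_fsbigr => r _.
have h := @integralZl_indic _ T R mu E mE (fun r => f_ k @^-1` [set r] : set T) r
  (fun r0 => preimage_nnfun0 (f_ k) r0) (mpre k r).
by rewrite /= integral_indic// in h; exact: h.
Qed.

Lemma sub_integral (mu1 mu2 : {measure set T -> \bar R}) (E1 E2 : set T)
  (mE1 : measurable E1) (mE2 : measurable E2) :
  (forall B, <<s G >> B -> mu1 (B `&` E1) = mu2 (B `&` E2)) ->
  \int[mu1]_(x in E1) (f x)%:E = \int[mu2]_(x in E2) (f x)%:E.
Proof.
move=> h12; rewrite (HE mu1 mE1) (HE mu2 mE2); congr (limn _); apply/funext => k.
apply: eq_fsbigr => r _; rewrite h12//.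
exact: (@measurable_funPTI _ _ TG R (f_ k) [set r] (measurable_set1 r)).
Qed.

End SubInt.
Unset Implicit Arguments.

Theorem lemma15 (R : realType) (d : measure_display) (T : measurableType d)
  (P : probability T R) (n m : nat)
  (a : 'I_m -> 'rV[R]_n) (b : 'I_m -> R) (beta : R)
  (f : 'rV[R]_n -> R) (mu : R) (gf : 'rV[R]_n -> 'rV[R]_n)
  (PiX : 'rV[R]_n -> 'rV[R]_n)
  (gamma delta s : nat -> R) (M eta : R)
  (x : nat -> T -> 'rV[R]_n) (i : nat -> T -> 'I_m) :
  (0 < m)%N ->
  (forall l, a l != 0) ->
  (exists z, Xfeas a b z) ->
  hoffman a b beta ->
  (forall z, is_proj (Xfeas a b) z (PiX z)) ->
  0 <= mu -> strongly_convex f mu ->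
  (forall z, subgrad f z (gf z)) -> rV_borel_fun gf ->
  (forall k, (1 <= k)%N -> [/\ 0 < gamma k, 0 < delta k & 0 < s k]) ->
  (* random initial point with finite second moment *)
  rvec (x 1%N) ->
  (\int[P]_w ((normv (x 1%N w)) ^+ 2)%:E < +oo)%E ->
  (* i_k uniform on {1..m}, independent of x_1, i_1, ..., i_{k-1} *)
  (forall k, (1 <= k)%N -> forall c : 'I_m,
     measurable (i k @^-1` [set c]) /\
     P (i k @^-1` [set c]) = (m%:R^-1)%:E) ->
  (forall k, (1 <= k)%N -> forall A, past_sigma x i k A -> forall c : 'I_m,
     P (A `&` i k @^-1` [set c]) = (P A * P (i k @^-1` [set c]))%E) ->
  (* the random incremental penalty iteration *)
  (forall k, (1 <= k)%N -> forall w,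
     x k.+1 w = x k w - s k *: (gf (x k w) +
                 gamma k *: grad_h (delta k) (a (i k w)) (b (i k w)) (x k w))) ->
  0 < M ->
  {ae P, forall w, forall k, (1 <= k)%N ->
     normv (gf (x k w)) <= M /\
     forall v, subgrad f (PiX (x k w)) v -> normv v <= M} ->
  0 <= eta <= 1 ->
  forall y, Xfeas a b y -> forall k, (1 <= k)%N ->
  forall Z : T -> R,
    cond_exp_version P (filtr x k) (fun w => normv (x k.+1 w - y) ^+ 2) Z ->
  {ae P, forall w,
     Z w <= (1 - mu * s k) * normv (x k w - y) ^+ 2
            + 2 * s k * (1 - eta) * (f y - f (x k w))
            + 2 * s k * eta * (f y - f (PiX (x k w)))
            + s k * gamma k * delta k / (2 * alpha_min a)
            - 2 * s k * (gamma k / (m%:R * beta) - eta * M)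
                * distv (x k w) (Xfeas a b)
            - eta * mu * s k * distv (x k w) (Xfeas a b) ^+ 2
            + 2 * s k ^+ 2 * (M ^+ 2 + gamma k ^+ 2)}.
Proof.
move=> m0 ha hXne hhof hproj mu0 hsc hsub hgfB hpos hx1 hint hunif hind hrec
  M0 hae heta y hy k k1 Z hZ.
have [g0 d0 s0] := hpos k k1.
pose Gp : set (set T) := [set A | (exists (j : 'I_n) (B : set R),
                  measurable B /\ A = (fun w => x 1%N w ord0 j) @^-1` B)
            \/ (exists (l : nat) (c : 'I_m),
                  (1 <= l < k)%N /\ A = i l @^-1` [set c])].
pose Gk : set (set T) := [set A | exists (l : nat) (j : 'I_n) (B : set R),
                 [/\ (1 <= l <= k)%N, measurable B &
                     A = (fun w => x l w ord0 j) @^-1` B]].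
pose TP := g_sigma_algebraType Gp.
pose TK := g_sigma_algebraType Gk.
have hGp : Gp `<=` measurable.
  move=> A [[j [B [mB ->]]] | [l [c [/andP [l1 lk] ->]]]].
  - by have := hx1 j measurableT B mB; rewrite setTI.
  - exact: (hunif l l1 c).1.
have mi l c : (1 <= l < k)%N -> measurable (i l @^-1` [set c] : set TP).
  by move=> h; apply: sub_sigma_algebra; right; exists l, c.
have hxP : forall l, (1 <= l <= k)%N -> forall j,
    measurable_fun (setT : set TP) (fun w => x l w ord0 j).
  elim=> [//|l IH] /andP [l1 lk] j.
  case: l IH l1 lk => [_ _ _ | l IH _ lk].
    move=> _ B mB; rewrite setTI; apply: sub_sigma_algebra; left; exists j, B.
    by split.
  have dl0 : 0 < delta l.+1 by have [] := hpos l.+1 isT.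
  pose F := fun (c : 'I_m) (w : T) =>
     (x l.+1 w - s l.+1 *: (gf (x l.+1 w) + gamma l.+1 *:
        grad_h (delta l.+1) (a c) (b c) (x l.+1 w)) - 0) ord0 j.
  rewrite (_ : (fun w => x l.+2 w ord0 j) = fun w => F (i l.+1 w) w); last first.
    by apply/funext => w; rewrite /F hrec// subr0.
  apply: (@meas_fin_case _ TP R m (i l.+1) F) => c; first exact: mi.
  apply: (@meas_comp_coords _ TP R n (x l.+1)
     (fun v : RV R n => (v - s l.+1 *: (gf v + gamma l.+1 *:
        grad_h (delta l.+1) (a c) (b c) v) - 0) ord0 j)).
    by apply: IH; rewrite /= ltnW.
  exact: meas_step.
have hGkP : Gk `<=` <<s Gp >>.
  move=> A [l [j [B [hl mB ->]]]].
  by have := hxP l hl j measurableT B mB; rewrite setTI.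
have hFP : forall A, filtr x k A -> measurable (A : set TP).
  move=> A hA; exact: (smallest_sub (@sigma_algebra_measurable _ TP) hGkP hA).
have hGk : Gk `<=` measurable.
  move=> A /hGkP hA; exact: (smallest_sub (@sigma_algebra_measurable _ T) hGp hA).
have hFm : forall A, filtr x k A -> measurable A.
  move=> A hA; exact: (smallest_sub (@sigma_algebra_measurable _ T) hGk hA).
have kk : (1 <= k <= k)%N by rewrite k1 leqnn.
pose h (c : 'I_m) (w : T) := normv (x k w - s k *: (gf (x k w) + gamma k *:
        grad_h (delta k) (a c) (b c) (x k w)) - y) ^+ 2.
pose G w := \sum_(c < m) m%:R^-1 * h c w.
pose phi (c : 'I_m) (v : RV R n) := normv (v - s k *: (gf v + gamma k *:
        grad_h (delta k) (a c) (b c) v) - y) ^+ 2.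
have mphi c : measurable_fun (setT : set (RV R n)) (phi c).
  exact: (@meas_phi R n gf hgfB (s k) (gamma k) (delta k) (a c) (b c) y d0).
have mhP c : measurable_fun (setT : set TP) (h c).
  exact: (@meas_comp_coords _ TP R n (x k) (phi c) (hxP k kk) (mphi c)).
have mhT c : measurable_fun setT (h c) by exact: (meas_sub hGp (mhP c)).
have mxK j : measurable_fun (setT : set TK) (fun w => x k w ord0 j).
  by move=> _ B mB; rewrite setTI; apply: sub_sigma_algebra; exists k, j, B.
have mGK : measurable_fun (setT : set TK) G.
  apply: measurable_sum => c; apply: measurable_funM => //.
  exact: (@meas_comp_coords _ TK R n (x k) (phi c) mxK (mphi c)).
have mGT : measurable_fun setT G by exact: (meas_sub hGk mGK).
have h0 c w : 0 <= h c w by rewrite /h sqr_ge0.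
have G0 w : 0 <= G w.
  by apply: sumr_ge0 => c _; rewrite mulr_ge0 // invr_ge0 ler0n.
have mI c : measurable (i k @^-1` [set c]) by exact: (hunif k k1 c).1.
have hX w : normv (x k.+1 w - y) ^+ 2 =
    \sum_(c < m) (\1_(i k @^-1` [set c]) w : R) * h c w.
  rewrite hrec// (bigD1 (i k w)) //= big1 ?addr0.
    by rewrite indicE mem_set// mul1r.
  move=> c /eqP hc; rewrite indicE memNset ?mul0r//.
  by move=> /= hic; apply: hc.
have minv : (0 <= m%:R^-1 :> R) by rewrite invr_ge0 ler0n.
have hint_eq : forall A, filtr x k A ->
    (\int[P]_(w in A) (normv (x k.+1 w - y) ^+ 2)%:E =
     \int[P]_(w in A) (G w)%:E)%E.
  move=> A hA; have mA := hFm A hA; have mAP := hFP A hA.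
  under eq_integral do rewrite hX -sumEFin.
  rewrite ge0_integral_sum//; last 2 first.
  - move=> c; apply/measurable_EFinP; apply: measurable_funM => //.
    exact: measurable_funTS.
  - by move=> c w _; rewrite lee_fin mulr_ge0.
  rewrite /G; under [RHS]eq_integral do rewrite -sumEFin.
  rewrite ge0_integral_sum//; last 2 first.
  - move=> c; apply/measurable_EFinP; apply: measurable_funM => //.
    exact: measurable_funTS.
  - by move=> c w _; rewrite lee_fin mulr_ge0.
  apply: eq_bigr => c _.
  have e1 : (\int[P]_(w in A) ((\1_(i k @^-1` [set c]) w : R) * h c w)%:E =
      \int[P]_(w in A `&` i k @^-1` [set c]) (h c w)%:E)%E.
    rewrite integral_mkcondr; apply: eq_integral => w _.
    rewrite /patch indicE; case: ifP => _; by rewrite ?mul1r ?mul0r.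
  rewrite e1.
  have mAI : measurable (A `&` i k @^-1` [set c]) by exact: measurableI.
  rewrite (@sub_integral _ T R Gp hGp (h c) (mhP c) (h0 c) P
     (mscale (NngNum minv) P) _ _ mAI mA); last first.
    move=> B hB; rewrite /mscale /= setIA.
    have hBA : past_sigma x i k (B `&` A) by exact: (@measurableI _ TP).
    by rewrite (hind k k1 _ hBA c) (hunif k k1 c).2 muleC.
  have mhA : measurable_fun A (fun w => (h c w)%:E).
    by apply/measurable_EFinP; exact: measurable_funTS.
  rewrite ge0_integral_mscale//; last by move=> w _; rewrite lee_fin.
  under [RHS]eq_integral do rewrite EFinM.
  by rewrite ge0_integralZl// ?lee_fin// => w _; rewrite lee_fin.
have [hZm hZint hZeq] := hZ.
have mZK : measurable_fun (setT : set TK) Z.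
  by move=> _ B mB; rewrite setTI; exact: hZm.
have mZT : measurable_fun setT Z by exact: (meas_sub hGk mZK).
pose AN (N : nat) := [set w | G w + N.+1%:R^-1 <= Z w] `&` [set w | G w <= N%:R].
have mANK N : measurable (AN N : set TK).
  apply: measurableI.
  - have := @measurable_fun_ler _ TK R setT (fun w => G w + N.+1%:R^-1) Z
      (measurable_funD mGK (measurable_cst _)) mZK measurableT [set true] I.
    by rewrite setTI.
  - have := @measurable_fun_ler _ TK R setT G (cst N%:R)
      mGK (measurable_cst _) measurableT [set true] I.
    by rewrite setTI.
have mAN N : measurable (AN N) by exact: (hFm _ (mANK N)).
have PAN N : P (AN N) = 0%E.
  set A := AN N; set e : R := N.+1%:R^-1.
  have e0 : 0 < e by rewrite invr_gt0 ltr0n.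
  have mA : measurable A := mAN N.
  have eqZ : (\int[P]_(w in A) (Z w)%:E = \int[P]_(w in A) (G w)%:E)%E.
    by rewrite hZeq ?hint_eq//; exact: mANK.
  have mGA : measurable_fun A (fun w => (G w)%:E).
    by apply/measurable_EFinP; exact: measurable_funTS.
  have le1 : (\int[P]_(w in A) ((G w + e)%R%:E) <= \int[P]_(w in A) (Z w)%:E)%E.
    apply: ge0_le_integral => //.
    - by move=> w _; rewrite lee_fin addr_ge0 // ltW.
    - apply/measurable_EFinP; apply: measurable_funTS; exact: measurable_funD.
    - by apply/measurable_EFinP; exact: measurable_funTS.
    - by move=> w [hw _]; rewrite lee_fin.
  have eq2 : (\int[P]_(w in A) ((G w + e)%R%:E) =
      \int[P]_(w in A) (G w)%:E + e%:E * P A)%E.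
    rewrite (eq_integral (fun w => ((G w)%:E + e%:E)%E)); last first.
      by move=> w _; rewrite EFinD.
    rewrite ge0_integralD//; try (by move=> w _; rewrite lee_fin; first [exact: G0 | exact: ltW e0]);
      try exact: measurable_cst; try exact: mGA.
    by rewrite integral_cst.
  have finG : (\int[P]_(w in A) (G w)%:E)%E \is a fin_num.
    rewrite ge0_fin_numE; last by apply: integral_ge0 => w _; rewrite lee_fin.
    apply: (@le_lt_trans _ _ (N%:R%:E * P A)%E).
      rewrite -integral_cst//.
      apply: ge0_le_integral => //; try (by move=> w _; rewrite lee_fin);
        try (by move=> w [_ hw]; rewrite lee_fin).
    rewrite ltey_eq fin_numM//.
    exact: fin_num_measure.
  move: le1; rewrite eq2 eqZ -{2}(adde0 (\int[P]_(w in A) (G w)%:E)%E) leeD2lE// => hle.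
  apply/eqP; rewrite eq_le measure_ge0 andbT.
  by rewrite -(@pmule_lle0 _ e%:E) ?lte_fin// muleC.
have aeZG : {ae P, forall w, Z w <= G w}.
  apply: (@negligibleS _ _ _ P (\bigcup_N AN N)); last first.
    by apply: negligible_bigcup => N; exists (AN N); split; [exact: mAN|exact: PAN|].
  move=> w /= hw.
  have lt : G w < Z w by rewrite ltNge; apply/negP.
  have dz : 0 < Z w - G w by rewrite subr_gt0.
  pose N := ((Num.Def.trunc (G w)).+1 + Num.Def.trunc ((Z w - G w)^-1))%N.
  exists N => //; split => /=.
  - have h1 := truncnS_gt ((Z w - G w)^-1).
    have h2 : ((Num.Def.trunc ((Z w - G w)^-1)).+1%:R <= N.+1%:R :> R).
      by rewrite ler_nat ltnS /N leq_addl.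
    have h3 : (Z w - G w)^-1 <= N.+1%:R by apply: ltW; exact: lt_le_trans h1 h2.
    have h4 : N.+1%:R^-1 <= Z w - G w.
      by rewrite -[X in _ <= X]invrK lef_pV2 ?posrE ?invr_gt0 ?ltr0n.
    move: h4; set q := N.+1%:R^-1; move=> h4; lra.
  - have h1 := truncnS_gt (G w).
    have h2 : ((Num.Def.trunc (G w)).+1%:R <= N%:R :> R).
      by rewrite ler_nat /N leq_addr.
    by apply: ltW; exact: lt_le_trans h1 h2.
move: hae aeZG; apply: filterS2 => w hw hzg.
have [hb1 hb2] := hw k k1.
apply: le_trans hzg _.
exact: (@pointwise R n m a b beta f mu gf PiX (gamma k) (delta k) (s k) M eta y (x k w)
  m0 ha hhof hproj hsc hsub g0 d0 s0 heta hy hb1 hb2).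
Qed.
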